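(* Let $A_n=1$ if $n=2^{k+1}-2$ for some integer $k\ge0$ and $A_n=0$ otherwise, and let $D(n)=\det\left(A_{i+j}\right)_{i,j=0}^{n-1}$ for $n\ge1$, $D(0)=1$. Then for all $n\ge 0$, $$D(2n)=(-1)^{\binom{n}{2}}D(n),\qquad D(2n+1)=(-1)^{\binom{n+1}{2}}D(n).$$ *)

(* Defs.v *)
From mathcomp Require Import all_boot all_algebra.
Set Implicit Arguments. Unset Strict Implicit. Unset Printing Implicit Defensive.
Import GRing.Theory.
Local Open Scope ring_scope.

(* is_A n <=> n = 2^(k+1) - 2 for some integer k >= 0.
   Any such k satisfies k <= n (since 2^(k+1) - 2 >= k), so quantifying over
   k : 'I_n.+1 loses nothing; this makes the predicate boolean. *)
Definition is_A (n : nat) : bool := [exists k : 'I_n.+1, n == (2 ^ k.+1 - 2)%N].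

Definition A (n : nat) : int := if is_A n then 1 else 0.

Definition D (n : nat) : int := \det (\matrix_(i < n, j < n) A (i + j)%N).

(* Main.v *)
Require Import Defs.
From mathcomp Require Import all_boot all_algebra.
From mathcomp Require Import all_boot all_algebra zify perm.
Set Implicit Arguments. Unset Strict Implicit. Unset Printing Implicit Defensive.
Import GRing.Theory.
Local Open Scope ring_scope.

Lemma is_AP n : reflect (exists k, n = (2 ^ k.+1 - 2)%N) (is_A n).
Proof.
apply: (iffP existsP) => [[k /eqP ->]|[k ->]]; first by exists k.
have hk : (k < (2 ^ k.+1 - 2).+1)%N.
  have := ltn_expl k (isT : (1 < 2)%N); rewrite expnS; lia.
by exists (Ordinal hk).
Qed.

Lemma A0 : A 0 = 1.
Proof. by rewrite /A; case: is_AP => // [[]]; exists 0%N. Qed.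

Lemma Aodd k : A (2 * k).+1 = 0.
Proof.
rewrite /A; case: is_AP => // -[j]; rewrite expnS.
have := expn_gt0 2 j; lia.
Qed.

Lemma Aeven k : A (2 * k).+2 = A k.
Proof.
rewrite /A; case: is_AP => [[j Hj]|Hn].
  case: is_AP => // Hk; case: Hk; move: Hj; case: j => [|j]; rewrite !expnS //.
  move=> h; exists j; rewrite expnS.
  have := expn_gt0 2 j; lia.
case: is_AP => // -[j' Hj'].
case: Hn; exists j'.+1; rewrite Hj' !expnS. have := expn_gt0 2 j'; lia.
Qed.
Definition Hk (a : nat -> int) m := \det (\matrix_(i < m, j < m) a (i + j)%N).

Lemma det_conj m (s : 'S_m) (M : 'M[int]_m) :
  \det (\matrix_(i, j) M (s i) (s j)) = \det M.
Proof.
have -> : \matrix_(i,j) M (s i) (s j) = row_perm s (col_perm s M).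
  by apply/matrixP=> i j; rewrite !mxE.
rewrite row_permE col_permE !det_mulmx !det_perm odd_permV.
by case: (odd_perm s); rewrite ?expr1 ?expr0 ?mulr1 ?mul1r // mulrN1 mulN1r opprK.
Qed.

Lemma Hk_g a m (g : 'I_m -> nat) : injective g -> (forall i, (g i < m)%N) ->
  Hk a m = \det (\matrix_(i,j) a (g i + g j)%N).
Proof.
move=> ginj gm.
pose f i : 'I_m := insubd i (g i).
have fE i : val (f i) = g i by rewrite val_insubd gm.
have finj : injective f by move=> i j /(congr1 val); rewrite !fE => /ginj.
rewrite /Hk -(det_conj (perm finj)); congr (\det _); apply/matrixP => i j.
by rewrite !mxE !permE !fE.
Qed.

Lemma detJ q : \det (block_mx 0 1%:M 1%:M 0 : 'M[int]_(q + q)) = (-1) ^+ q.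
Proof.
have -> : (block_mx 0 1%:M 1%:M 0 : 'M[int]_(q + q)) =
   block_mx 1%:M 0 1%:M 1%:M *m block_mx 1%:M 1%:M 0 (-1)%:M
   *m block_mx 1%:M 0 (-1)%:M 1%:M.
  rewrite !mulmx_block !(mulmx1, mul1mx, mulmx0, mul0mx, addr0, add0r).
  by rewrite !raddfN /= addrN mul0mx subr0.
rewrite !det_mulmx det_ublock det_lblock !det_lblock !det_scalar !expr1n !mul1r.
by rewrite mulr1.
Qed.

Lemma det_anti1 q (B C D : 'M[int]_q) :
  \det (block_mx 0 B C D) = (-1) ^+ q * \det B * \det C.
Proof.
have -> : block_mx 0 B C D = block_mx B 0 D C *m block_mx 0 1%:M 1%:M 0.
  by rewrite mulmx_block !(mulmx1, mulmx0, addr0, add0r).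
by rewrite det_mulmx detJ det_lblock mulrC mulrA.
Qed.

Lemma det_anti2 q (X B C : 'M[int]_q) :
  \det (block_mx X B C 0) = (-1) ^+ q * \det B * \det C.
Proof.
have -> : block_mx X B C 0 = block_mx B X 0 C *m block_mx 0 1%:M 1%:M 0.
  by rewrite mulmx_block !(mulmx1, mulmx0, addr0, add0r).
by rewrite det_mulmx detJ det_ublock mulrC mulrA.
Qed.

Lemma det_1blk n (r : 'rV[int]_n) (c : 'cV[int]_n) N :
  \det (block_mx (1%:M : 'M_1) r c N) = \det (N - c *m r).
Proof.
have -> : block_mx (1%:M : 'M_1) r c N =
   block_mx 1%:M 0 c 1%:M *m block_mx 1%:M r 0 (N - c *m r).
  by rewrite mulmx_block !(mulmx1, mul1mx, mulmx0, mul0mx, addr0, add0r) addrC subrK.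
by rewrite det_mulmx det_lblock det_ublock !det_scalar !expr1n !mul1r.
Qed.

Definition c k := A (2 * k).

Definition geo n1 n2 (i : 'I_(n1 + n2)) : nat :=
  if (i < n1)%N then (2 * i)%N else (2 * (i - n1)).+1.

Lemma geoL n1 n2 (i : 'I_n1) : geo (lshift n2 i) = (2 * i)%N.
Proof. by rewrite /geo /= ltn_ord. Qed.
Lemma geoR n1 n2 (j : 'I_n2) : geo (rshift n1 j) = (2 * j).+1.
Proof. by rewrite /geo /= ltnNge leq_addr /= addKn. Qed.

Lemma geo_inj n1 n2 : injective (@geo n1 n2).
Proof.
move=> i j; rewrite /geo => h; apply: val_inj => /=.
move: h; case: ifP; case: ifP; lia.
Qed.

Lemma geo_lt n1 n2 : (n2 <= n1 <= n2.+1)%N -> forall i, (@geo n1 n2 i < n1 + n2)%N.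
Proof.
move=> h i; have := ltn_ord i; rewrite /geo; case: ifP; lia.
Qed.

Lemma HA_split n1 n2 : (n2 <= n1 <= n2.+1)%N ->
  Hk A (n1 + n2) = Hk c n1 * Hk A n2.
Proof.
move=> h; rewrite (Hk_g A (@geo_inj n1 n2) (geo_lt h)).
set M := \matrix_(i, j) _.
rewrite -[M]submxK.
have -> : dlsubmx M = 0.
  by apply/matrixP=> i j; rewrite !mxE geoL geoR addSn -mulnDr Aodd.
rewrite det_ublock /Hk; congr (_ * _); apply: congr1; apply/matrixP=> i j;
  rewrite !mxE ?geoL ?geoR.
  by rewrite -mulnDr.
by rewrite addSn addnS -mulnDr Aeven.
Qed.

Lemma c0 : c 0 = 1. Proof. exact: A0. Qed.
Lemma c_evS k : c (2 * k).+2 = 0.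
Proof. rewrite /c; have -> : (2 * (2*k).+2 = (2 * (2*k).+1).+2)%N by lia.
by rewrite Aeven Aodd. Qed.
Lemma c_odd k : c (2 * k).+1 = c k.
Proof. rewrite /c; have -> : (2 * (2*k).+1 = (2 * (2*k)).+2)%N by lia.
by rewrite Aeven. Qed.
Lemma c_S k : c k.+1 = A k.
Proof. rewrite /c; have -> : (2 * k.+1 = (2 * k).+2)%N by lia.
by rewrite Aeven. Qed.

Lemma Hc_even q : Hk c (q + q) = (-1) ^+ q * Hk c q * Hk c q.
Proof.
rewrite (Hk_g c (@geo_inj q q) (geo_lt (n1:=q) (n2:=q) _)); last by rewrite leqnn leqnSn.
set M := \matrix_(i, j) _.
rewrite -[M]submxK.
have -> : drsubmx M = 0.
  by apply/matrixP=> i j; rewrite !mxE !geoR addSn addnS -mulnDr c_evS.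
rewrite det_anti2 /Hk; congr (_ * _ * _); apply: congr1; apply/matrixP=> i j;
  rewrite !mxE ?geoL ?geoR.
  by rewrite addnS -mulnDr c_odd.
by rewrite addSn -mulnDr c_odd.
Qed.

Definition g2n q (x : nat) : nat := if (x <= q)%N then (2 * x)%N else (2 * (x - q)).-1.
Definition g2 q (i : 'I_(1 + (q + q))) : nat := g2n q i.

Lemma g2_inj q : injective (@g2 q).
Proof.
move=> i j; rewrite /g2 /g2n => h; apply: val_inj => /=.
move: h; case: ifP; case: ifP; lia.
Qed.

Lemma g2_lt q i : (@g2 q i < 1 + (q + q))%N.
Proof. have := ltn_ord i; rewrite /g2 /g2n; case: ifP; lia. Qed.

Lemma g2n0 q : g2n q 0 = 0%N. Proof. by []. Qed.
Lemma g2nL q (i : 'I_q) : g2n q (1 + i) = (2 * i).+2.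
Proof. rewrite /g2n; have := ltn_ord i; case: ifP; lia. Qed.
Lemma g2nR q (j : 'I_q) : g2n q (1 + (q + j)) = (2 * j).+1.
Proof. rewrite /g2n; have := ltn_ord j; case: ifP; lia. Qed.

Lemma e1 x y : ((2*x).+2 + (2*y).+2 = (2*(x+y).+1).+2)%N. Proof. lia. Qed.
Lemma e2 x y : ((2*x).+2 + (2*y).+1 = (2*(x+y).+1).+1)%N. Proof. lia. Qed.
Lemma e3 x y : ((2*x).+1 + (2*y).+2 = (2*(x+y).+1).+1)%N. Proof. lia. Qed.

Lemma Hc_odd q : Hk c (1 + (q + q)) = (-1) ^+ q * Hk A q * Hk A q.
Proof.
rewrite (Hk_g c (@g2_inj q) (@g2_lt q)).
set M := \matrix_(i, j) _.
rewrite -[M]submxK.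
have -> : ulsubmx M = 1%:M.
  by apply/matrixP=> i j; rewrite !mxE !ord1 /= /g2 g2n0 c0.
rewrite det_1blk.
set N := (X in \det X).
rewrite -[N]submxK.
have -> : ulsubmx N = 0.
  apply/matrixP=> i j; rewrite !mxE big_ord1 !mxE /g2 /= !g2nL g2n0 !addn0.
  by rewrite add0n e1 !c_evS mulr0 subr0.
rewrite det_anti1 /Hk; congr (_ * _ * _); apply: congr1; apply/matrixP=> i j;
  rewrite !mxE big_ord1 !mxE /g2 /= ?g2nL ?g2nR g2n0 !addn0 ?add0n ?c_evS ?mulr0 ?mul0r subr0.
  by rewrite e2 c_odd c_S.
by rewrite e3 c_odd c_S.
Qed.

Lemma sgn_even q : (-1) ^+ 'C(q + q, 2) = (-1) ^+ q :> int.
Proof.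
rewrite -signr_odd -[in RHS]signr_odd; congr (_ ^+ _).
rewrite bin2; have -> : ((q+q) * (q+q).-1 = (q * (q+q).-1).*2)%N.
  by rewrite -mul2n mulnA mul2n addnn.
rewrite doubleK oddM; case: q => [|q] //=.
by rewrite addnS /= addnn odd_double andbT.
Qed.

Lemma sgn_odd q : (-1) ^+ 'C(1 + (q + q), 2) = (-1) ^+ q :> int.
Proof.
rewrite -signr_odd -[in RHS]signr_odd; congr (_ ^+ _).
rewrite bin2 add1n /= mulnC; have -> : ((q+q) * (q+q).+1 = (q * (q+q).+1).*2)%N.
  by rewrite -mul2n mulnA mul2n addnn.
by rewrite doubleK oddM /= addnn odd_double andbT.
Qed.

Lemma Hk0 a : Hk a 0 = 1.
Proof. exact: det_mx00. Qed.

Lemma sgnsq k : (-1) ^+ k * (-1) ^+ k = 1 :> int.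
Proof. by rewrite -exprD -signr_odd addnn odd_double. Qed.

Lemma main_ind m : Hk c m = (-1) ^+ 'C(m, 2) /\ Hk A m * Hk A m = 1.
Proof.
elim: m {-2}m (leqnn m) => [|M IH] m Hm.
  by move: Hm; rewrite leqn0 => /eqP ->; rewrite !Hk0 mulr1.
have [q [Em|Em]] : exists q, m = (q + q)%N \/ m = (1 + (q + q))%N.
  exists m./2; rewrite addnn; move: (odd_double_half m).
  by case: (odd m) => /= h; [right|left]; rewrite -[LHS]h.
- subst m; case: q Hm => [|q] Hm; first by rewrite !Hk0 mulr1.
  have [|Hc HA] := IH q.+1; first (move: Hm; lia).
  split; first by rewrite Hc_even sgn_even Hc -mulrA sgnsq mulr1.
  rewrite HA_split ?leqnn ?leqnSn //.
  by rewrite mulrACA HA mulr1 Hc sgnsq.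
- subst m; have [|Hc HA] := IH q; first (move: Hm; lia).
  have Hcm : Hk c (1 + (q + q)) = (-1) ^+ 'C(1 + (q + q), 2).
    by rewrite Hc_odd sgn_odd -mulrA HA mulr1.
  split => //.
  have -> : (1 + (q + q) = q.+1 + q)%N by lia.
  rewrite HA_split ?leqnn ?leqnSn // mulrACA HA mulr1.
  have Hc1 : Hk c q.+1 = (-1) ^+ 'C(q.+1, 2).
    move: Hcm Hm {Hc HA}; case: q => [|q]; first by [].
    by move=> _ Hm; have [|Hc1 _] := IH q.+2; first (move: Hm; lia).
  by rewrite Hc1 sgnsq.
Qed.

Theorem theorem2p5 (n : nat) :
  D (2 * n) = (-1) ^+ 'C(n, 2) * D n /\
  D (2 * n).+1 = (-1) ^+ 'C(n.+1, 2) * D n.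
Proof.
change (Hk A (2 * n) = (-1) ^+ 'C(n, 2) * Hk A n /\
        Hk A (2 * n).+1 = (-1) ^+ 'C(n.+1, 2) * Hk A n).
have -> : (2 * n = n + n)%N by lia.
have -> : ((n + n).+1 = n.+1 + n)%N by lia.
rewrite !HA_split ?leqnn ?leqnSn //.
by have [-> _] := main_ind n; have [-> _] := main_ind n.+1.
Qed.
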